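(* Let $G$ be a connected cubic graph of order $n\geq 6$ with $\alpha(G)=\frac{3}{5}\,\mathrm{diss}(G)$. Then $n$ is divisible by $18$, $\alpha(G)=\frac{n}{3}$, $\mathrm{diss}(G)=\frac{5n}{9}$, and for every maximum dissociation set $D$ of $G$, every component of $G[D]$ has exactly two vertices (i.e. $G[D]$ has no isolated vertices).
   Context: All graphs are finite, simple and undirected. $\alpha(G)$ denotes the independence number of $G$. A set $D$ of vertices of $G$ is a dissociation set if the subgraph $G[D]$ induced by $D$ has maximum degree at most $1$; the dissociation number $\mathrm{diss}(G)$ is the maximum order of a dissociation set in $G$; a maximum dissociation set is a dissociation set of order $\mathrm{diss}(G)$. *)

(* Defs.v *)
From mathcomp Require Import all_boot.
Set Implicit Arguments. Unset Strict Implicit. Unset Printing Implicit Defensive.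

Definition simple_graph (V : finType) (e : rel V) : Prop :=
  symmetric e /\ irreflexive e.

Definition nbhd (V : finType) (e : rel V) (v : V) : {set V} := [set u | e v u].

Definition cubic (V : finType) (e : rel V) : Prop :=
  forall v : V, #|nbhd e v| = 3.

Definition connected_graph (V : finType) (e : rel V) : Prop :=
  forall x y : V, connect e x y.

Definition independent (V : finType) (e : rel V) (S : {set V}) : bool :=
  [forall x in S, forall y in S, ~~ e x y].

Definition alpha (V : finType) (e : rel V) : nat :=
  \max_(S : {set V} | independent e S) #|S|.

Definition dissociation (V : finType) (e : rel V) (D : {set V}) : bool :=
  [forall v in D, #|nbhd e v :&: D| <= 1].

Definition diss (V : finType) (e : rel V) : nat :=
  \max_(D : {set V} | dissociation e D) #|D|.

Definition max_dissociation (V : finType) (e : rel V) (D : {set V}) : Prop :=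
  dissociation e D /\ #|D| = diss e.

(* Main.v *)
Require Import Defs.
From mathcomp Require Import all_boot zify fingroup perm.
Set Implicit Arguments. Unset Strict Implicit. Unset Printing Implicit Defensive.

Definition col (V : finType) (e : rel V) (S : {set V}) (f : V -> 'I_3) :=
  forall x y, x \in S -> y \in S -> e x y -> f x != f y.

Lemma color_avoid (C : {set 'I_3}) : #|C| < 3 -> exists c, c \notin C.
Proof.
move=> HC; case: (pickP [pred c | c \notin C]) => [c Hc|H]; first by exists c.
have CT : C = setT by apply/setP=> c; rewrite inE; move: (H c) => /= /negbFE.
by move: HC; rewrite CT cardsT card_ord.
Qed.

Lemma col_ext (V : finType) (e : rel V) S f s (C : {set 'I_3}) :
  symmetric e -> irreflexive e ->
  col e S f -> s \notin S -> (forall y, y \in S -> e s y -> f y \in C) -> #|C| < 3 ->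
  exists f', col e (s |: S) f' /\ {in S, f' =1 f}.
Proof.
move=> Hsy Hir Hcol HsS HC HCc; have [c Hc] := color_avoid HCc.
exists (fun x => if x == s then c else f x); split; last first.
  by move=> x Hx /=; case: eqP => // E; move: Hx; rewrite E (negbTE HsS).
move=> x y; rewrite !inE => Hx Hy Hxy.
case: (x =P s) Hx => [Exs _|Hxs /= Hx]; case: (y =P s) Hy => [Eys _|Hys /= Hy].
- by move: Hxy; rewrite Exs Eys Hir.
- by apply/eqP => E; move: Hc; rewrite E HC // -Exs.
- by apply/eqP => E; move: Hc; rewrite -E HC // -Hsy -Eys.
- exact: Hcol.
Qed.

Lemma col_sub (V : finType) (e : rel V) (S S' : {set V}) f : S' \subset S -> col e S f -> col e S' f.
Proof. by move=> /subsetP H Hc x y Hx Hy; apply: Hc; apply: H. Qed.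

Lemma closed_all (V : finType) (e : rel V) (S : {set V}) x :
  connected_graph e -> x \in S -> (forall s y, s \in S -> e s y -> y \in S) -> S = setT.
Proof.
move=> Hcon Hx Hcl; apply/setP => y; rewrite inE.
have /connectP [p Hp ->] := Hcon x y.
elim: p x Hx Hp => [|z p IH] x Hx //= /andP [Hxz Hp].
exact: IH (Hcl _ _ Hx Hxz) Hp.
Qed.


Lemma col_pair (V : finType) (e : rel V) (a b : V) f :
  symmetric e -> irreflexive e -> ~~ e a b -> col e [set a; b] f.
Proof.
move=> Hsy Hir Hab x y; rewrite !inE => /orP [] /eqP -> /orP [] /eqP ->;
  by rewrite ?Hir // ?(negbTE Hab) // Hsy (negbTE Hab).
Qed.

Lemma deg_ext (V : finType) (e : rel V) (a b : V) (U : {set V}) :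
  symmetric e -> irreflexive e -> ~~ e a b ->
  U \subset ~: [set a; b] ->
  (forall W : {set V}, W \subset U -> W != set0 ->
     exists2 w, w \in W & #|nbhd e w :&: W| + (e w a || e w b) <= 2) ->
  exists f, col e ([set a; b] :|: U) f /\ f a = ord0 /\ f b = ord0.
Proof.
move=> Hsy Hir Hab.
move: {2}#|U| (leqnn #|U|) => n; elim: n U => [|n IH] U Hn HU Hg.
  move: Hn; rewrite leqn0 cards_eq0 => /eqP ->; exists (fun _ => ord0).
  by rewrite setU0; split => //; apply: col_pair.
case: (set_0Vmem U) => [->|[w0 Hw0]].
  exists (fun _ => ord0); rewrite setU0; split => //; exact: col_pair.
have HU0 : U != set0 by apply/set0Pn; exists w0.
have [w Hw Hwc] := Hg U (subxx U) HU0.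
have Hwab : w \notin [set a; b] by move/subsetP: HU => /(_ w Hw); rewrite inE.
have [f [Hf [Ha Hb]]] : exists f, col e ([set a; b] :|: (U :\ w)) f /\ f a = ord0 /\ f b = ord0.
  apply: (IH (U :\ w)).
  - by move: Hn; rewrite (cardsD1 w U) Hw add1n ltnS.
  - by apply: subset_trans HU; apply: subsetDl.
  - move=> W HW HW0; apply: Hg HW0; apply: subset_trans HW _; exact: subsetDl.
set C := (f @: (nbhd e w :&: (U :\ w))) :|: (if e w a || e w b then [set ord0] else set0).
have H1 : w \notin [set a; b] :|: (U :\ w) by move: Hwab; rewrite !inE eqxx /= ?orbF.
have H2 : forall y, y \in [set a; b] :|: (U :\ w) -> e w y -> f y \in C.
  move=> y /setUP [/set2P [] ->|Hy] Hwy.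
  - by rewrite /C; apply/setUP; right; rewrite Hwy /= Ha; apply: set11.
  - by rewrite /C; apply/setUP; right; rewrite Hwy orbT /= Hb; apply: set11.
  - by rewrite /C; apply/setUP; left; apply: imset_f; apply/setIP; split => //; rewrite inE.
have H3 : #|C| < 3.
  apply: leq_ltn_trans (leq_card_setU _ _) _.
  apply: leq_ltn_trans (leq_add (leq_imset_card _ _) (leqnn _)) _.
  have : #|nbhd e w :&: (U :\ w)| <= #|nbhd e w :&: U|.
    by apply: subset_leq_card; apply: setIS; apply: subsetDl.
  by case: (e w a || e w b) Hwc; rewrite ?cards1 ?cards0 /=; lia.
have [f' [Hf' Hff]] := @col_ext V e _ f w C Hsy Hir Hf H1 H2 H3.
exists f'; split; last by rewrite !Hff // !inE eqxx ?orbT.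
suff <- : w |: ([set a; b] :|: U :\ w) = [set a; b] :|: U by [].
apply/setP => x; rewrite !inE; case: (x =P w) => [->|] /=; first by rewrite Hw !orbT.
by [].
Qed.


Lemma nbW1 (V : finType) (e : rel V) (W : {set V}) w y :
  cubic e -> e w y -> y \notin W -> #|nbhd e w :&: W| <= 2.
Proof.
move=> Hc Hwy HyW; have := cardsID W (nbhd e w); rewrite Hc.
have : 0 < #|nbhd e w :\: W| by apply/card_gt0P; exists y; rewrite !inE Hwy HyW.
lia.
Qed.

Lemma nbW2 (V : finType) (e : rel V) (W : {set V}) w y1 y2 :
  cubic e -> y1 != y2 -> e w y1 -> y1 \notin W -> e w y2 -> y2 \notin W ->
  #|nbhd e w :&: W| <= 1.
Proof.
move=> Hc Hy Hw1 H1 Hw2 H2; have := cardsID W (nbhd e w); rewrite Hc.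
have : 2 <= #|nbhd e w :\: W|.
  have <- : #|[set y1; y2]| = 2 by rewrite cards2 Hy.
  apply: subset_leq_card; apply/subsetP => z.
  by rewrite !inE => /orP [] /eqP ->; rewrite ?Hw1 ?H1 ?Hw2 ?H2.
lia.
Qed.

Lemma perm2 (T : finType) (x1 x2 y1 y2 : T) : x1 != x2 -> y1 != y2 ->
  exists p : {perm T}, p x1 = y1 /\ p x2 = y2.
Proof.
move=> Hx Hy; set z := tperm x1 y1 x2.
have Hz : z != y1.
  rewrite /z; apply/eqP => E.
  have : tperm x1 y1 x2 = tperm x1 y1 x1 by rewrite E tpermL.
  by move/perm_inj => E'; rewrite E' eqxx in Hx.
exists (tperm x1 y1 * tperm z y2)%g; rewrite !permM tpermL; split.
  by rewrite tpermD // eq_sym.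
by rewrite -/z tpermL.
Qed.

Lemma perm_avoid (xa xb A B : 'I_3) : exists p : {perm 'I_3}, p xa != A /\ p xb != B.
Proof.
case: (xa =P xb) => [<-|Hne].
  have HAB : #|[set A; B]| < 3 by rewrite cards2; case: (A != B).
  have [c Hc] := @color_avoid [set A; B] HAB.
  exists (tperm xa c); rewrite tpermL; move: Hc; rewrite !inE negb_or => /andP [H1 H2].
  by split.
have HA : #|[set A]| < 3 by rewrite cards1.
have [ya Hya] := @color_avoid [set A] HA.
have HB : #|[set B; ya]| < 3 by rewrite cards2; case: (B != ya).
have [yb Hyb] := @color_avoid [set B; ya] HB.
move: Hya Hyb; rewrite !inE negb_or => Hya /andP [Hyb1 Hyb2].
have Hy : ya != yb by rewrite eq_sym.
have [p [H1 H2]] := perm2 (introN eqP Hne) Hy.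
by exists p; rewrite H1 H2.
Qed.

Lemma glue (V : finType) (e : rel V) (W : {set V}) s t phi psi (p : {perm 'I_3}) :
  symmetric e ->
  (forall w y, w \in W -> e w y -> [\/ y \in W, y = s | y = t]) ->
  col e (~: W) phi -> col e W psi ->
  (forall w, w \in W -> e w s -> p (psi w) != phi s) ->
  (forall w, w \in W -> e w t -> p (psi w) != phi t) ->
  col e setT (fun x => if x \in W then p (psi x) else phi x).
Proof.
move=> Hsy Hcl Hphi Hpsi Hs Ht x y _ _ Hxy.
case: (boolP (x \in W)) => Hx; case: (boolP (y \in W)) => Hy.
- by rewrite (inj_eq perm_inj); apply: Hpsi.
- case: (Hcl x y Hx Hxy) => [H|E|E]; first by move: Hy; rewrite H.
    by rewrite E; apply: Hs; rewrite // -E.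
  by rewrite E; apply: Ht; rewrite // -E.
- rewrite Hsy in Hxy; rewrite eq_sym.
  case: (Hcl y x Hy Hxy) => [H|E|E]; first by move: Hx; rewrite H.
    by rewrite E; apply: Hs; rewrite // -E.
  by rewrite E; apply: Ht; rewrite // -E.
- by apply: Hphi; rewrite ?inE.
Qed.


Lemma card_lt_notin (V : finType) (A : {set V}) x : x \notin A -> #|A| < #|V|.
Proof.
move=> Hx; apply: leq_trans (max_card (mem (x |: A))).
by rewrite cardsU1 Hx.
Qed.

Lemma nonadj (V : finType) (e : rel V) v :
  symmetric e -> irreflexive e -> cubic e -> connected_graph e -> 6 <= #|V| ->
  exists a b, [/\ e v a, e v b, a != b & ~~ e a b].
Proof.
move=> Hsy Hir Hc Hcon H6.
case: (boolP [exists a, exists b, [&& e v a, e v b, a != b & ~~ e a b]]).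
  by move=> /existsP [a /existsP [b /and4P [*]]]; exists a, b.
rewrite negb_exists => /forallP H.
have Hadj : forall a b, e v a -> e v b -> a != b -> e a b.
  move=> a b Ha Hb Hab; move: (H a); rewrite negb_exists => /forallP /(_ b).
  by rewrite Ha Hb Hab /= negbK.
set N := v |: nbhd e v.
have HN : N = setT.
  apply: (@closed_all _ e N v Hcon); first by rewrite !inE eqxx.
  move=> s y; rewrite !inE => /orP [/eqP ->|Hvs] Hsy'; first by rewrite Hsy' orbT.
  have Hsub : v |: (nbhd e v :\ s) \subset nbhd e s.
    apply/subsetP => z; rewrite !inE => /orP [/eqP ->|/andP [Hzs Hvz]]; first by rewrite Hsy.
    by apply: Hadj; rewrite // eq_sym.
  have Hcard : #|nbhd e s| <= #|v |: (nbhd e v :\ s)|.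
    have Hs' : s \in nbhd e v by rewrite inE.
    have Hv' : v \notin nbhd e v :\ s by rewrite !inE Hir andbF.
    have := Hc s; have := cardsD1 s (nbhd e v); rewrite Hs' Hc cardsU1 Hv'; lia.
  have := eqEcard (v |: (nbhd e v :\ s)) (nbhd e s); rewrite Hsub Hcard => /eqP E.
  have : y \in nbhd e s by rewrite inE.
  by rewrite -E !inE => /orP [->|/andP [_ ->]]; rewrite ?orbT.
have : #|N| <= 4 by rewrite cardsU1 Hc; case: (v \notin _).
by rewrite HN cardsT; lia.
Qed.

Lemma sep_case (V : finType) (e : rel V) v a b (W : {set V}) :
  symmetric e -> irreflexive e -> cubic e ->
  e v a -> e v b -> ~~ e a b -> a != b -> a \notin W -> b \notin W -> v \notin W ->
  (forall w y, w \in W -> e w y -> [\/ y \in W, y = a | y = b]) ->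
  2 <= #|nbhd e a :&: W| ->
  (forall S : {set V}, #|S| < #|V| -> exists f, col e S f) ->
  exists f, col e setT f.
Proof.
move=> Hsy Hir Hc Hva Hvb Hnab Hab Ha Hb Hv Hcl H2 IH.
have Hav : e a v by rewrite Hsy.
have Hvna : v != a by apply/eqP => E; move: Hva; rewrite E Hir.
have Hvnb : v != b by apply/eqP => E; move: Hvb; rewrite E Hir.
set W' := a |: W.
have Hcl' : forall w y, w \in W' -> e w y -> [\/ y \in W', y = v | y = b].
  move=> w y /setU1P [->|Hw] Hwy.
  - case: (boolP (y \in W)) => HyW; first by constructor 1; rewrite /W' !inE HyW orbT.
    case: (y =P v) => [->|Hyv]; first by constructor 2.
    exfalso; have := nbW2 Hc (introN eqP Hyv) Hwy HyW Hav Hv; lia.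
  - case: (Hcl w y Hw Hwy) => [H|->|->].
    + by constructor 1; rewrite /W' !inE H orbT.
    + by constructor 1; rewrite /W' !inE eqxx.
    + by constructor 3.
have HvW' : v \notin W' by rewrite /W' !inE negb_or Hvna Hv.
have HbW' : b \notin W' by rewrite /W' !inE negb_or eq_sym Hab Hb.
have [phi Hphi] : exists phi, col e (~: W') phi.
  apply: IH; apply: (card_lt_notin (x := a)); by rewrite /W' !inE eqxx.
have [y Hy Hy'] : exists2 y, y \in nbhd e v & y \notin [set a; b].
  apply/subsetPn; apply/negP => /subset_leq_card.
  by rewrite Hc cards2; case: (a != b).
have [psi Hpsi] : exists psi, col e (W' :|: [set v; b]) psi.
  apply: IH; apply: (card_lt_notin (x := y)).
  move: Hy Hy'; rewrite !inE !negb_or => Hvy /andP [Hya Hyb].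
  rewrite Hya Hyb /= andbT; apply/andP; split.
    apply/negP => HyW; case: (Hcl y v HyW _) => [|H|H|H]; first by rewrite Hsy.
    - by rewrite H in Hv.
    - by rewrite H eqxx in Hvna.
    - by rewrite H eqxx in Hvnb.
  by apply/eqP => E; move: Hvy; rewrite E Hir.
have Hpsi' : col e W' psi by apply: col_sub Hpsi; apply: subsetUl.
have Hvbphi : phi v != phi b by apply: Hphi; rewrite // inE ?HvW' ?HbW'.
have Hvbpsi : psi v != psi b by apply: Hpsi; rewrite // !inE eqxx ?orbT.
have [p [Hpv Hpb]] := perm2 Hvbpsi Hvbphi.
exists (fun x => if x \in W' then p (psi x) else phi x).
apply: glue Hcl' Hphi Hpsi' _ _ => // w Hw Hwx.
  rewrite -Hpv (inj_eq perm_inj); apply: Hpsi => //.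
    by apply/setUP; left.
  by apply/setUP; right; rewrite !inE eqxx.
rewrite -Hpb (inj_eq perm_inj); apply: Hpsi => //.
  by apply/setUP; left.
by apply/setUP; right; rewrite !inE eqxx orbT.
Qed.


Lemma glob (V : finType) (e : rel V) :
  symmetric e -> irreflexive e -> cubic e -> connected_graph e -> 6 <= #|V| ->
  (forall S : {set V}, #|S| < #|V| -> exists f, col e S f) ->
  exists f, col e setT f.
Proof.
move=> Hsy Hir Hc Hcon H6 IH.
have /card_gt0P [v _] : 0 < #|V| by clear -H6; lia.
have [a [b [Hva Hvb Hab Hnab]]] := nonadj v Hsy Hir Hc Hcon H6.
set U := ~: [set a; b].
case: (boolP [forall W : {set V}, ((W \subset U) && (W != set0)) ==>
          [exists w in W, #|nbhd e w :&: W| + (e w a || e w b) <= 2]]) => Hg.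
  have [f [Hf _]] : exists f, col e ([set a; b] :|: U) f /\ f a = ord0 /\ f b = ord0.
    apply: deg_ext Hsy Hir Hnab (subxx _) _.
    move=> W HW HW0; move/forallP: Hg => /(_ W); rewrite HW HW0 /=.
    by move=> /existsP [w /andP [Hw Hww]]; exists w.
  by exists f; rewrite /U setUCr in Hf.
rewrite negb_forall in Hg; case/existsP: Hg => W; rewrite negb_imply.
move=> /andP [/andP [HW HW0] Hbad].
have Hbad' : forall w, w \in W -> 2 < #|nbhd e w :&: W| + (e w a || e w b).
  move=> w Hw; move: Hbad; rewrite negb_exists => /forallP /(_ w).
  by rewrite Hw /= ltnNge.
have HaW : a \notin W.
  by apply/negP => /(subsetP HW); rewrite /U !inE eqxx.
have HbW : b \notin W.
  by apply/negP => /(subsetP HW); rewrite /U !inE eqxx orbT.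
have Hcl : forall w y, w \in W -> e w y -> [\/ y \in W, y = a | y = b].
  move=> w y Hw Hwy; case: (boolP (y \in W)) => HyW; first by constructor 1.
  case: (y =P a) => [->|Hya]; first by constructor 2.
  case: (y =P b) => [->|Hyb]; first by constructor 3.
  exfalso; have := Hbad' w Hw; case: (boolP (e w a)) => Hwa /=.
    have := nbW2 Hc (introN eqP Hya) Hwy HyW Hwa HaW; move=> X Y; clear -X Y; lia.
  case: (boolP (e w b)) => Hwb /=.
    have := nbW2 Hc (introN eqP Hyb) Hwy HyW Hwb HbW; move=> X Y; clear -X Y; lia.
  have := nbW1 Hc Hwy HyW; move=> X Y; clear -X Y; lia.
have HvW : v \notin W.
  apply/negP => Hv; have := Hbad' v Hv; rewrite Hva /=.
  have := nbW2 Hc Hab Hva HaW Hvb HbW; move=> X Y; clear -X Y; lia.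
case: (leqP 2 #|nbhd e a :&: W|) => Hp.
  exact: (sep_case Hsy Hir Hc Hva Hvb Hnab Hab HaW HbW HvW Hcl Hp IH).
case: (leqP 2 #|nbhd e b :&: W|) => Hq.
  have Hnba : ~~ e b a by rewrite Hsy.
  have Hba : b != a by rewrite eq_sym.
  apply: (sep_case Hsy Hir Hc Hvb Hva Hnba Hba HbW HaW HvW _ Hq IH).
  move=> w y Hw Hwy; case: (Hcl w y Hw Hwy) => H; [exact: Or31 | exact: Or33 | exact: Or32].
have [w0 Hw0] : exists w0, w0 \in W by apply/set0Pn.
have [phi Hphi] : exists phi, col e (~: W) phi.
  by apply: IH; apply: (card_lt_notin (x := w0)); rewrite inE negbK.
have [psi Hpsi] := IH W (card_lt_notin HvW).
set xa := if [pick w in nbhd e a :&: W] is Some w then psi w else ord0.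
set xb := if [pick w in nbhd e b :&: W] is Some w then psi w else ord0.
have [p [Hpa Hpb]] := perm_avoid xa xb (phi a) (phi b).
exists (fun x => if x \in W then p (psi x) else phi x).
apply: (glue Hsy Hcl Hphi Hpsi).
  move=> w Hw Hwa; suff -> : psi w = xa by [].
  have Hw' : w \in nbhd e a :&: W by rewrite !inE Hsy Hwa Hw.
  rewrite /xa; case: pickP => [w1 Hw1|H0]; last by move: (H0 w); rewrite Hw'.
  have /card_le1_eqP Hu : #|nbhd e a :&: W| <= 1 by [].
  by rewrite (Hu w w1 Hw' Hw1).
move=> w Hw Hwb; suff -> : psi w = xb by [].
have Hw' : w \in nbhd e b :&: W by rewrite !inE Hsy Hwb Hw.
rewrite /xb; case: pickP => [w1 Hw1|H0]; last by move: (H0 w); rewrite Hw'.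
have /card_le1_eqP Hu : #|nbhd e b :&: W| <= 1 by [].
by rewrite (Hu w w1 Hw' Hw1).
Qed.

Lemma colorable (V : finType) (e : rel V) :
  symmetric e -> irreflexive e -> cubic e -> connected_graph e -> 6 <= #|V| ->
  forall S : {set V}, exists f, col e S f.
Proof.
move=> Hsy Hir Hc Hcon H6 S.
move: {2}#|S| (leqnn #|S|) => n; elim: n S => [|n IH] S Hn.
  exists (fun _ => ord0); move: Hn; rewrite leqn0 cards_eq0 => /eqP -> x y.
  by rewrite inE.
case: (boolP [exists s in S, #|nbhd e s :&: S| <= 2]) => [/existsP [s /andP [Hs Hs2]] | Hall].
  have HsS : s \notin S :\ s by rewrite !inE eqxx.
  have [f Hf] : exists f, col e (S :\ s) f.
    by apply: IH; move: Hn; rewrite (cardsD1 s S) Hs add1n ltnS.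
  have Hcnt : #|f @: (nbhd e s :&: (S :\ s))| < 3.
    have X := leq_imset_card f (nbhd e s :&: (S :\ s)).
    have Y : #|nbhd e s :&: (S :\ s)| <= #|nbhd e s :&: S|.
      by apply: subset_leq_card; apply: setIS; apply: subsetDl.
    clear -X Y Hs2; lia.
  have Himg : forall y, y \in S :\ s -> e s y -> f y \in f @: (nbhd e s :&: (S :\ s)).
    by move=> y Hy Hsy'; apply: imset_f; rewrite inE [y \in nbhd e s]inE Hsy' Hy.
  have [f' [Hf' _]] := col_ext Hsy Hir Hf HsS Himg Hcnt.
  by exists f'; rewrite setD1K in Hf'.
case: (set_0Vmem S) => [->|[x Hx]]; first by exists (fun _ => ord0) => ? ?; rewrite inE.
have HS : S = setT.
  apply: (closed_all Hcon Hx) => s y Hs Hsy'.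
  have Hs3 : 2 < #|nbhd e s :&: S|.
    by move: Hall; rewrite negb_exists => /forallP /(_ s); rewrite Hs /= ltnNge.
  case: (boolP (y \in S)) => // HyS; have X := nbW1 Hc Hsy' HyS; clear -X Hs3; lia.
subst S; apply: glob => // S' HS'; apply: IH; move: Hn HS'; rewrite cardsT.
clear; lia.
Qed.


Lemma t18 (n a d A : nat) : 3 * a = n -> 9 * d = 5 * n -> 3 * n = 2 * A -> 18 %| n.
Proof. move=> *; lia. Qed.

Lemma card_nbhdI (V : finType) (e : rel V) x (B : {set V}) :
  #|nbhd e x :&: B| = \sum_(y in B) (e x y : nat).
Proof.
rewrite -sum1_card big_mkcond /= [RHS]big_mkcond /=; apply: eq_bigr => y _.
by rewrite !inE; case: (y \in B); case: (e x y).
Qed.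

Lemma sum_ind (V : finType) (A B : {set V}) : B \subset A ->
  \sum_(x in A) ((x \in B) : nat) = #|B|.
Proof.
move=> /subsetP H; rewrite -sum1_card big_mkcond /= [RHS]big_mkcond /=.
apply: eq_bigr => x _; case: (boolP (x \in B)) => Hb; first by rewrite (H x Hb).
by case: (x \in A).
Qed.

Lemma uniq_nb (V : finType) (e : rel V) (X : {set V}) x y z :
  #|nbhd e x :&: X| <= 1 -> e x y -> y \in X -> e x z -> z \in X -> y = z.
Proof.
move=> /card_le1_eqP H Hy HyX Hz HzX; apply: H; by rewrite !inE ?Hy ?HyX ?Hz ?HzX.
Qed.

Lemma half_indep (V : finType) (e : rel V) (X : {set V}) :
  symmetric e -> irreflexive e -> dissociation e X ->
  exists2 T : {set V}, T \subset X & independent e T /\ #|X| <= 2 * #|T|.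
Proof.
move=> Hsy Hir /forallP HX.
have HX1 : forall x, x \in X -> #|nbhd e x :&: X| <= 1.
  by move=> x Hx; move: (HX x); rewrite Hx.
set T := [set x in X | [forall y in X, e x y ==> (enum_rank x < enum_rank y)]].
have HTX : T \subset X by apply/subsetP => x; rewrite inE => /andP [].
exists T => //; split.
  apply/forallP => x; apply/implyP => Hx; apply/forallP => y; apply/implyP => Hy.
  apply/negP => Hxy; move: Hx Hy; rewrite !inE => /andP [Hx /forallP /(_ y)].
  move=> H1 /andP [Hy /forallP /(_ x)]; rewrite Hx Hy Hxy Hsy Hxy /= in H1 *.
  by move=> H2; move: (ltn_trans H1 H2); rewrite ltnn.
set U := X :\: T.
pose g x := odflt x [pick y in X | e x y].
have Hg : forall x, x \in U -> [/\ g x \in T, g x \in X & e x (g x)].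
  move=> x; rewrite !inE negb_and => /andP [/orP [/negP //|Hn] Hx].
  rewrite negb_forall in Hn; case/existsP: Hn => y; rewrite negb_imply.
  move=> /andP [Hy]; rewrite negb_imply => /andP [Hxy Hr].
  rewrite /g; case: pickP => [y1 /andP [Hy1 Hxy1]|H0]; last by move: (H0 y); rewrite Hy Hxy.
  have Eyy := uniq_nb (HX1 x Hx) Hxy Hy Hxy1 Hy1; subst y1 => /=.
  split => //; rewrite Hy /=; apply/forallP => z; apply/implyP => Hz; apply/implyP => Hyz.
  have Ez : z = x by apply: (uniq_nb (HX1 y Hy) Hyz Hz); rewrite // Hsy.
  subst z; rewrite ltnNge in Hr; rewrite ltn_neqAle (negbNE Hr) andbT.
  apply/negP => /eqP /val_inj /enum_rank_inj E; by move: Hxy; rewrite E Hir.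
have Hinj : {in U &, injective g}.
  move=> x1 x2 H1 H2 E; have [_ Hg1 He1] := Hg x1 H1; have [_ Hg2 He2] := Hg x2 H2.
  move: H1 H2; rewrite !inE => /andP [_ Hx1] /andP [_ Hx2].
  apply: (uniq_nb (HX1 (g x1) Hg1)) => //; first by rewrite Hsy.
  by rewrite E Hsy.
have HU : #|U| <= #|T|.
  rewrite -(card_in_imset Hinj); apply: subset_leq_card; apply/subsetP => y.
  by case/imsetP => x Hx ->; case: (Hg x Hx).
have := cardsID T X; rewrite (setIidPr HTX) -/U => Hc.
clear -Hc HU; lia.
Qed.


Lemma alpha_ge (V : finType) (e : rel V) (S : {set V}) : independent e S -> #|S| <= alpha e.
Proof. by move=> HS; rewrite /alpha; apply: (@leq_bigmax_cond _ (fun S => independent e S) (fun S => #|S|) S HS). Qed.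

Lemma diss_ge (V : finType) (e : rel V) (S : {set V}) : dissociation e S -> #|S| <= diss e.
Proof. by move=> HS; rewrite /diss; apply: (@leq_bigmax_cond _ (fun S => dissociation e S) (fun S => #|S|) S HS). Qed.

Lemma diss_max (V : finType) (e : rel V) : exists D, dissociation e D /\ #|D| = diss e.
Proof.
have H0 : 0 < #|[pred D : {set V} | dissociation e D]|.
  apply/card_gt0P; exists set0; rewrite inE; apply/forallP => x; by rewrite inE.
have [D HD E] := @eq_bigmax_cond _ _ (fun D : {set V} => #|D|) H0.
by exists D; split; [rewrite inE in HD | rewrite /diss -E].
Qed.

Lemma key (V : finType) (e : rel V) (D : {set V}) :
  symmetric e -> irreflexive e -> cubic e -> dissociation e D ->
  3 * #|D| + #|[set x in D | #|nbhd e x :&: D| == 0]| <= #|V| + 2 * alpha e.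
Proof.
move=> Hsy Hir Hc HD.
have HD1 : forall x, x \in D -> #|nbhd e x :&: D| <= 1.
  by move=> x Hx; move/forallP: HD => /(_ x); rewrite Hx.
set R := ~: D.
set I := [set x in D | #|nbhd e x :&: D| == 0].
set R2 := [set r in R | #|nbhd e r :&: D| == 2].
set R3 := [set r in R | #|nbhd e r :&: D| == 3].
have Sa : \sum_(x in D) #|nbhd e x :&: R| = \sum_(r in R) #|nbhd e r :&: D|.
  rewrite (eq_bigr (fun x => \sum_(y in R) (e x y : nat))); last by move=> x _; rewrite card_nbhdI.
  rewrite [RHS](eq_bigr (fun x => \sum_(y in D) (e x y : nat))); last by move=> x _; rewrite card_nbhdI.
  rewrite exchange_big; apply: eq_bigr => r _; apply: eq_bigr => x _; by rewrite Hsy.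
have Sb : 2 * #|D| + #|I| <= \sum_(x in D) #|nbhd e x :&: R|.
  have -> : 2 * #|D| + #|I| = \sum_(x in D) (2 + (x \in I)).
    rewrite big_split /= sum_nat_const sum_ind; first by rewrite mulnC.
    by apply/subsetP => x; rewrite inE => /andP [].
  apply: leq_sum => x Hx; have := cardsID D (nbhd e x); rewrite setDE -/R Hc.
  have := HD1 x Hx; rewrite /I inE Hx /=.
  case: (#|nbhd e x :&: D|) => [|[|k]] //= H1 H2; clear -H1 H2; lia.
have Sc : \sum_(r in R) #|nbhd e r :&: D| <= #|R| + #|R2| + 2 * #|R3|.
  have -> : #|R| + #|R2| + 2 * #|R3| = \sum_(r in R) (1 + (r \in R2) + (r \in R3) + (r \in R3)).
    rewrite !big_split /= sum1_card !sum_ind; first by rewrite mul2n -addnn addnA.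
    - by apply/subsetP => x; rewrite inE => /andP [].
    - by apply/subsetP => x; rewrite inE => /andP [].
  apply: leq_sum => r Hr.
  have : #|nbhd e r :&: D| <= 3 by rewrite -(Hc r); apply: subset_leq_card; apply: subsetIl.
  move: Hr; rewrite /R2 /R3 !inE => -> /=.
  by case: (#|nbhd e r :&: D|) => [|[|[|[|k]]]].
have HR3 : forall r y, r \in R3 -> e r y -> y \in D.
  move=> r y; rewrite inE => /andP [_ /eqP H3] Hry.
  have : nbhd e r :&: D == nbhd e r by rewrite eqEcard subsetIl H3 Hc.
  move/eqP => E; have : y \in nbhd e r :&: D by rewrite E inE.
  by rewrite inE => /andP [].
have HR2 : dissociation e R2.
  apply/forallP => r; apply/implyP; rewrite inE => /andP [Hr /eqP H2].
  have := cardsID D (nbhd e r); rewrite setDE -/R Hc H2 => H.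
  have : #|nbhd e r :&: R2| <= #|nbhd e r :&: R|.
    by apply: subset_leq_card; apply: setIS; apply/subsetP => z; rewrite inE => /andP [].
  clear -H; lia.
have [T HT [HTi HT2]] := half_indep Hsy Hir HR2.
have HTR : T \subset R.
  by apply: subset_trans HT _; apply/subsetP => z; rewrite inE => /andP [].
have HR3R : R3 \subset R by apply/subsetP => z; rewrite inE => /andP [].
have Hdisj : R3 :&: T = set0.
  apply/setP => z; rewrite !inE; apply/negP => /andP [/andP [_ /eqP H3] HzT].
  move/subsetP: HT => /(_ z HzT); rewrite inE H3 andbF //.
have HSi : independent e (R3 :|: T).
  apply/forallP => x; apply/implyP => Hx; apply/forallP => y; apply/implyP => Hy.
  apply/negP => Hxy.
  have HxR : x \in R by move: Hx; rewrite inE => /orP [/(subsetP HR3R)|/(subsetP HTR)].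
  have HyR : y \in R by move: Hy; rewrite inE => /orP [/(subsetP HR3R)|/(subsetP HTR)].
  move: Hx Hy => /setUP [Hx|Hx] /setUP [Hy|Hy].
  - by move: HyR; rewrite inE (HR3 x y Hx Hxy).
  - by move: HyR; rewrite inE (HR3 x y Hx Hxy).
  - by move: HxR; rewrite inE (HR3 y x Hy); rewrite // Hsy.
  - by move/forallP: HTi => /(_ x); rewrite Hx => /forallP /(_ y); rewrite Hy Hxy.
have HS := alpha_ge HSi.
have HSc : #|R3 :|: T| = #|R3| + #|T| by rewrite cardsU Hdisj cards0 subn0.
have HVc := cardsC D; rewrite -/R in HVc.
clear -Sa Sb Sc HT2 HS HSc HVc.
lia.
Qed.


Lemma alpha_third (V : finType) (e : rel V) :
  symmetric e -> irreflexive e -> cubic e -> connected_graph e -> 6 <= #|V| ->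
  #|V| <= 3 * alpha e.
Proof.
move=> Hsy Hir Hc Hcon H6.
have [f Hf] := colorable Hsy Hir Hc Hcon H6 setT.
pose C (i : 'I_3) := [set x | f x == i].
have Hi : forall i, independent e (C i).
  move=> i; apply/forallP => x; apply/implyP => Hx; apply/forallP => y; apply/implyP => Hy.
  apply/negP => Hxy; move: (Hf x y (in_setT x) (in_setT y) Hxy).
  by move: Hx Hy; rewrite !inE => /eqP -> /eqP ->; rewrite eqxx.
have E : #|V| = \sum_(i < 3) #|C i|.
  rewrite (eq_bigr (fun i => \sum_x ((f x == i) : nat))); last first.
    move=> i _; rewrite -sum1_card big_mkcond /=; apply: eq_bigr => x _.
    by rewrite inE; case: (f x == i).
  rewrite exchange_big /= -sum1_card; apply: eq_bigr => x _.
  rewrite (eq_bigr (fun i => if i == f x then 1 else 0)); last first.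
    by move=> i _; rewrite eq_sym; case: (f x == i).
  by rewrite -big_mkcond /= big_pred1_eq.
rewrite E; apply: leq_trans (_ : \sum_(i < 3) alpha e <= _).
  by apply: leq_sum => i _; apply: alpha_ge.
by rewrite sum_nat_const card_ord.
Qed.

Lemma handshake (V : finType) (e : rel V) :
  symmetric e -> irreflexive e -> cubic e -> exists A, 3 * #|V| = 2 * A.
Proof.
move=> Hsy Hir Hc.
pose A := \sum_x \sum_y ((e x y && (enum_rank x < enum_rank y)) : nat).
exists A.
have -> : 3 * #|V| = \sum_x \sum_y (e x y : nat).
  rewrite -sum1_card big_distrr /=; apply: eq_bigr => x _.
  by rewrite muln1 -(Hc x) -(setIT (nbhd e x)) card_nbhdI; apply: eq_bigl => y; rewrite inE.
have -> : \sum_x \sum_y (e x y : nat) =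
   \sum_x \sum_y (((e x y && (enum_rank x < enum_rank y)) : nat) + ((e x y && (enum_rank y < enum_rank x)) : nat)).
  apply: eq_bigr => x _; apply: eq_bigr => y _.
  case: (boolP (e x y)) => Hxy //=.
  case: ltngtP => //= /val_inj /enum_rank_inj E.
  by move: Hxy; rewrite E Hir.
rewrite (eq_bigr (fun x => \sum_y ((e x y && (enum_rank x < enum_rank y)) : nat) + \sum_y ((e x y && (enum_rank y < enum_rank x)) : nat))); last by move=> x _; rewrite big_split.
rewrite big_split /= mul2n -addnn; congr (_ + _).
rewrite exchange_big; apply: eq_bigr => x _; apply: eq_bigr => y _; by rewrite Hsy.
Qed.

Theorem mainTheorem2 (V : finType) (e : rel V) :
  simple_graph e -> connected_graph e -> cubic e -> 6 <= #|V| ->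
  5 * alpha e = 3 * diss e ->
  [/\ 18 %| #|V|, 3 * alpha e = #|V|, 9 * diss e = 5 * #|V| &
      forall D : {set V}, max_dissociation e D ->
        forall v, v \in D -> #|nbhd e v :&: D| = 1].
Proof.
move=> [Hsy Hir] Hcon Hc H6 H5.
have H3 := alpha_third Hsy Hir Hc Hcon H6.
have [D0 [HD0 ED0]] := diss_max e.
have K0 := key Hsy Hir Hc HD0; rewrite ED0 in K0.
have Ha : 3 * alpha e = #|V| by clear -H3 K0 H5; lia.
have Hd : 9 * diss e = 5 * #|V| by clear -Ha H5; lia.
have [A HA] := handshake Hsy Hir Hc.
split => //; first by apply: (t18 Ha Hd HA).
move=> D [HD ED] v Hv.
have K := key Hsy Hir Hc HD; rewrite ED in K.
have HI : #|[set x in D | #|nbhd e x :&: D| == 0]| = 0 by clear -K Ha H5; lia.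
move: HI => /eqP; rewrite cards_eq0 => /eqP /setP /(_ v); rewrite !inE Hv /= => H0.
have := HD; move/forallP => /(_ v); rewrite Hv /=.
move: H0; case: (#|nbhd e v :&: D|) => [|[|k]] //.
Qed.
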